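(* Let $\Theta_1,\Theta_2,\ldots$ be independent random variables with $\mathbb P(\Theta_j\le\theta)=\theta/(\theta+j-1)$ for $\theta\ge0$ (convention $0/0=1$), and for fixed $n\ge1$ let $C_{n,\theta}$ be the composition of $n$ whose binary representation is $(1(\Theta_j\le\theta))_{1\le j\le n}$. Then $(C_{n,\theta},\theta\ge0)$ is a (time-inhomogeneous) Markov process whose transition rates are as follows: if at time $\theta$ the state is the composition encoded by a binary sequence (starting with $1$), then each $0$ in that sequence, located at place $j$, switches to $1$ at rate $1/(\theta+j-1)$, independently, and all other transition rates are zero.
   Context: A composition of $n$ is a sequence of positive integers $(n_1,\ldots,n_k)$ with sum $n$. Its binary representation is the length-$n$ 0/1 sequence formed by concatenating the words $10^{n_1-1},10^{n_2-1},\ldots,10^{n_k-1}$ (so the $1$'s sit at places $1,n_1+1,\ldots,n_1+\cdots+n_{k-1}+1$); every 0/1 sequence of length $n$ beginning with $1$ encodes a unique composition of $n$. *)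

(* Defs.v *)
From HB Require Import structures.
From mathcomp Require Import all_boot all_order all_algebra.
From mathcomp Require Import all_classical all_reals all_analysis.
Set Implicit Arguments. Unset Strict Implicit. Unset Printing Implicit Defensive.
Import Order.TTheory GRing.Theory Num.Theory.
Import numFieldNormedType.Exports.
Local Open Scope classical_set_scope.
Local Open Scope ring_scope.

Definition is_composition (n : nat) (c : seq nat) : bool :=
  all (fun k => 0 < k)%N c && (sumn c == n).

Definition encode (c : seq nat) : seq bool :=
  flatten [seq true :: nseq (k - 1) false | k <- c].

(* Decoding a 0/1 sequence starting with 1 into the composition it encodes:
   aux returns (number of leading zeros, composition encoded by the rest). *)
Fixpoint decode_aux (s : seq bool) : nat * seq nat :=
  match s with
  | [::] => (0%N, [::])
  | b :: s' => let: (z, p) := decode_aux s' in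
               if b then (0%N, z.+1 :: p) else (z.+1, p)
  end.
Definition decode (s : seq bool) : seq nat := (decode_aux s).2.

(* cdf of Theta_{i+1} (0-based index i): theta / (theta + i), with 0/0 = 1. *)
Definition cdfTheta {R : realType} (i : nat) (theta : R) : R :=
  if theta + i%:R == 0 then 1 else theta / (theta + i%:R).

Definition Pr {d} {T : measurableType d} {R : realType}
  (P : probability T R) (A : set T) : R := fine (P A).

Definition mutually_independent {d} {T : measurableType d} {R : realType}
  (P : probability T R) (X : nat -> T -> R) : Prop :=
  forall (J : seq nat) (B : nat -> set R), uniq J ->
    (forall j, j \in J -> measurable (B j)) ->
    Pr P (\bigcap_(j in [set j | j \in J]) (X j @^-1` B j))
    = \prod_(j <- J) Pr P (X j @^-1` B j).

(* The composition process: C_{n,theta} encoded by (1(Theta_j <= theta))_{1<=j<=n}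
   (0-based: bit i is 1(Theta i <= theta), Theta i standing for Theta_{i+1}). *)
Definition Cproc {T : Type} {R : realType} (Theta : nat -> T -> R) (n : nat)
  (theta : R) (w : T) : seq nat :=
  decode [seq (Theta i w <= theta) | i <- iota 0 n].

(* Markov property (time-inhomogeneous) of a process X indexed by times >= 0
   with values in a discrete (eq)type S: conditionally on the present, the
   future is independent of any finite set of past observations. *)
Definition is_markov {d} {T : measurableType d} {R : realType} {S : eqType}
  (P : probability T R) (X : R -> T -> S) : Prop :=
  forall (past : seq (R * S)) (s t : R) (x y : S),
    all (fun p => (0 <= p.1) && (p.1 <= s)) past -> 0 <= s -> s <= t ->
    let A := [set w | all (fun p => X p.1 w == p.2) past] in
    let Ex := [set w | X s w = x] in
    let Ey := [set w | X t w = y] in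
    0 < Pr P (A `&` Ex) ->
    Pr P (A `&` Ex `&` Ey) / Pr P (A `&` Ex) = Pr P (Ex `&` Ey) / Pr P Ex.

(* The claimed transition rate from composition c to composition c' at time
   theta: nonzero only if the binary sequence of c' is obtained from that of c
   by switching a single 0, at (1-based) place j = i+1, to 1; the rate is then
   1/(theta + j - 1) = 1/(theta + i). *)
Definition rate {R : realType} (n : nat) (theta : R) (c c' : seq nat) : R :=
  \sum_(i < n)
    (if (nth true (encode c) i == false) &&
        (encode c' == set_nth false (encode c) i true)
     then (theta + i%:R)^-1 else 0).

Definition has_rates {d} {T : measurableType d} {R : realType}
  (P : probability T R) (n : nat) (X : R -> T -> seq nat)
  (q : R -> seq nat -> seq nat -> R) : Prop :=
  forall (theta : R) (c c' : seq nat),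
    0 <= theta -> is_composition n c -> is_composition n c' -> c != c' ->
    0 < Pr P [set w | X theta w = c] ->
    (fun h => Pr P ([set w | X theta w = c] `&` [set w | X (theta + h) w = c'])
                / Pr P [set w | X theta w = c] / h)
      @ 0^'+ --> q theta c c'.

(* Main.v *)
Require Import Defs.
From HB Require Import structures.
From mathcomp Require Import all_boot all_order all_algebra.
From mathcomp Require Import all_classical all_reals all_analysis.
Import Order.TTheory GRing.Theory Num.Theory.
Local Open Scope classical_set_scope.
Local Open Scope ring_scope.

Notation enc := Defs.encode.
Notation dec := Defs.decode.

Lemma decode_aux_nseq m s :
  decode_aux (nseq m false ++ s) = (m + (decode_aux s).1, (decode_aux s).2)%N.
Proof.
elim: m => [|m IH] /=; first by case: (decode_aux s).
by rewrite IH.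
Qed.

Lemma decode_aux_encode c : all (fun k => 0 < k)%N c -> decode_aux (enc c) = (0%N, c).
Proof.
elim: c => [|k c IH] //= /andP [k0 /IH H].
rewrite /Defs.encode /= -/(Defs.encode c) decode_aux_nseq H /= addn0.
by rewrite subn1 prednK.
Qed.

Lemma decode_encode c : all (fun k => 0 < k)%N c -> dec (enc c) = c.
Proof. by move=> /decode_aux_encode; rewrite /Defs.decode => ->. Qed.

Lemma decode_aux_inv s :
  nseq (decode_aux s).1 false ++ enc (decode_aux s).2 = s /\
  all (fun k => 0 < k)%N (decode_aux s).2.
Proof.
elim: s => [|b s [IH1 IH2]] //=.
case: (decode_aux s) IH1 IH2 => z p /= IH1 IH2.
case: b => /=; last by rewrite IH1.
by rewrite /Defs.encode /= -/(Defs.encode p) subn1 /= IH1.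
Qed.

Lemma encode_decode s : enc (dec (true :: s)) = true :: s.
Proof.
have [H1 _] := decode_aux_inv (true :: s).
move: H1; rewrite /Defs.decode /=.
by case: (decode_aux s).
Qed.

Lemma size_encode c : size (enc c) = sumn [seq k.-1.+1 | k <- c].
Proof.
elim: c => [|k c IH] //=.
rewrite /Defs.encode /= -/(Defs.encode c) size_cat size_nseq IH subn1.
by [].
Qed.
Section PrLemmas.
Context {d : measure_display} {T : measurableType d} {R : realType} (P : probability T R).

Lemma Pr_fin (A : set T) : measurable A -> P A \is a fin_num.
Proof. exact: fin_num_measure. Qed.

Lemma Pr0 : Pr P set0 = 0.
Proof. by rewrite /Pr measure0. Qed.

Lemma Pr_ge0 A : 0 <= Pr P A.
Proof. by rewrite /Pr fine_ge0. Qed.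

Lemma PrDI {A B : set T} : measurable A -> measurable B ->
  Pr P A = Pr P (A `\` B) + Pr P (A `&` B).
Proof.
move=> mA mB; rewrite /Pr (measureDI P mA mB) fineD // Pr_fin //; [exact: measurableD|exact: measurableI].
Qed.

Lemma PrC A : measurable A -> Pr P (~` A) = 1 - Pr P A.
Proof.
move=> mA; rewrite /Pr probability_setC // fineB // Pr_fin //.
Qed.

Lemma Pr_le A B : measurable A -> measurable B -> A `<=` B -> Pr P A <= Pr P B.
Proof.
move=> mA mB AB; rewrite /Pr fine_le ?Pr_fin //; by apply: le_measure; rewrite ?inE.
Qed.

Lemma Pr_as A G : measurable A -> measurable G -> Pr P G = 1 ->
  Pr P A = Pr P (A `&` G).
Proof.
move=> mA mG PG; rewrite (PrDI mA mG).
suff -> : Pr P (A `\` G) = 0 by rewrite add0r.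
apply/eqP; rewrite eq_le Pr_ge0 andbT.
have : Pr P (A `\` G) <= Pr P (~` G).
  apply: Pr_le => //; first exact: measurableD; exact: measurableC.
by rewrite PrC // PG subrr.
Qed.
End PrLemmas.
Definition Bset {R : realType} (L : seq (R * bool)) : set R :=
  [set r | all (fun q => (r <= q.1) == q.2) L].

Lemma Bset1_meas {R : realType} (a : R) (b : bool) :
  measurable [set r : R | (r <= a) == b].
Proof.
case: b.
  have -> : [set r : R | (r <= a) == true] = [set` `]-oo, a]].
    by apply/seteqP; split => r /=; rewrite in_itv /= eqb_id.
  exact: measurable_itv.
have -> : [set r : R | (r <= a) == false] = [set` `]a, +oo[].
  by apply/seteqP; split => r /=; rewrite in_itv /= andbT eqbF_neg -ltNge.
exact: measurable_itv.
Qed.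

Lemma Bset_meas {R : realType} (L : seq (R * bool)) : measurable (Bset L).
Proof.
elim: L => [|q L IH].
  by have -> : Bset [::] = @setT R by apply/seteqP; split.
have -> : Bset (q :: L) = [set r | (r <= q.1) == q.2] `&` Bset L.
  by apply/seteqP; split => r /= /andP.
by apply: measurableI => //; exact: Bset1_meas.
Qed.

Section Meas.
Context {d : measure_display} {T : measurableType d} {R : realType}
  (Theta : nat -> T -> R) (mT : forall i, measurable_fun setT (Theta i)).

Lemma pre_meas i (B : set R) : measurable B -> measurable (Theta i @^-1` B).
Proof. by move=> mB; have := mT i measurableT B mB; rewrite setTI. Qed.

Lemma bits_meas (tau : R) (I : seq nat) (Q : seq bool -> bool) :
  measurable [set w | Q [seq (Theta i w <= tau) | i <- I]].
Proof.
elim: I Q => [|a I IH] Q /=.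
  case: (Q [::]).
    by have -> : [set _ : T | true] = setT by apply/seteqP; split.
  by have -> : [set _ : T | false] = set0 by apply/seteqP; split.
have mA : measurable (Theta a @^-1` [set r | (r <= tau) == true]).
  by apply: pre_meas; apply: Bset1_meas.
have -> : [set w | Q ((Theta a w <= tau) :: [seq (Theta i w <= tau) | i <- I])] =
  ((Theta a @^-1` [set r | (r <= tau) == true]) `&` [set w | Q (true :: [seq (Theta i w <= tau) | i <- I])])
  `|` (~` (Theta a @^-1` [set r | (r <= tau) == true]) `&` [set w | Q (false :: [seq (Theta i w <= tau) | i <- I])]).
  rewrite predeqE => w /=; case: (Theta a w <= tau) => /=.
  - by split; [move=> H; left | case=> -[]].
  - by split; [move=> H; right | case=> -[]].
apply: measurableU.
  apply: measurableI => //; exact: (IH (fun s => Q (true :: s))).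
apply: measurableI; [exact: measurableC | exact: (IH (fun s => Q (false :: s)))].
Qed.

Lemma E_meas n (L : seq (R * seq nat)) :
  measurable [set w | all (fun p => Cproc Theta n p.1 w == p.2) L].
Proof.
elim: L => [|p L IH] /=; first by have -> : [set _ : T | true] = setT by apply/seteqP; split.
have -> : [set w | (Cproc Theta n p.1 w == p.2) && all (fun p => Cproc Theta n p.1 w == p.2) L]
  = [set w : T | (fun s : seq bool => dec s == p.2) [seq (Theta i w <= p.1) | i <- iota 0 n]] `&`
    [set w | all (fun p => Cproc Theta n p.1 w == p.2) L].
  by apply/seteqP; split => w /= /andP.
apply: measurableI => //; exact: (bits_meas p.1 (iota 0 n) (fun s : seq bool => dec s == p.2)).
Qed.
End Meas.

Lemma bits_dec (s : seq bool) x : head false s = true ->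
  (dec s == x) = [&& size (enc x) == size s, dec (enc x) == x &
     all (fun i => nth false s i == nth false (enc x) i) (iota 0 (size s))].
Proof.
case: s => [|b s] // Hb; have {Hb} -> : b = true by [].
apply/eqP/and3P.
  move=> <-; rewrite encode_decode !eqxx; split => //.
  by apply/allP => i _ /=.
move=> [/eqP Hs /eqP Hx Hn]; move/allP: Hn => Hn.
have -> : true :: s = enc x.
  apply: (@eq_from_nth _ false); first by rewrite Hs.
  move=> i Hi; apply/eqP; rewrite Hn // mem_iota /= add0n; exact: Hi.
by [].
Qed.

Lemma comp_size n c : is_composition n c -> size (enc c) = n.
Proof.
move=> /andP [Hp /eqP <-]; rewrite size_encode; congr sumn.
elim: c Hp => [|k c IH] //= /andP [k0 /IH ->]; by rewrite prednK.
Qed.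

Lemma comp_dec n c : is_composition n c -> dec (enc c) = c.
Proof. by move=> /andP [Hp _]; exact: decode_encode. Qed.

Lemma comp_head n c : (1 <= n)%N -> is_composition n c -> nth false (enc c) 0 = true.
Proof.
move=> n1 /andP [_ /eqP]; case: c => [|k c] /=; first by move=> H; rewrite -H in n1.
by [].
Qed.

Lemma bl1 (z a u v : bool) : (u -> v) -> z && (a && (u && (v && true))) = z && (a && (u && true)).
Proof. by case: z a u v => [] [] [] [] //= ->. Qed.
Lemma bl2 (z u v : bool) : (u -> v) -> z && (u && (v && true)) = z && (u && true).
Proof. by case: z u v => [] [] [] //= ->. Qed.
Lemma bl3 (z a u v : bool) : (u -> ~~ v) -> z && (a && (u && (v && true))) = false.
Proof. by case: z a u v => [] [] [] [] //= ->. Qed.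
Lemma bl4 (z u v : bool) : (u -> ~~ v) -> z && (u && (v && true)) = false.
Proof. by case: z u v => [] [] [] //= ->. Qed.
Lemma bl5 (z a u v : bool) : (u -> a) -> z && (a && (u && (v && true))) = z && (u && (v && true)).
Proof. by case: z a u v => [] [] [] [] //= ->. Qed.
Lemma bl6 (z a u : bool) : (u -> a) -> z && (a && (u && true)) = z && (u && true).
Proof. by case: z a u => [] [] [] //= ->. Qed.
Lemma bl7 (z a u v : bool) : (u -> ~~ a) -> z && (a && (u && (v && true))) = false.
Proof. by case: z a u v => [] [] [] [] //= ->. Qed.
Lemma bl8 (z a u : bool) : (u -> ~~ a) -> z && (a && (u && true)) = false.
Proof. by case: z a u => [] [] [] //= ->. Qed.

Lemma mult_bool {R : realType} (m : set R -> R) (z a u v : R -> bool) :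
  m set0 = 0 ->
  ((forall r, u r -> v r) \/ (forall r, u r -> ~~ v r) \/
   (forall r, u r -> a r) \/ (forall r, u r -> ~~ a r)) ->
  m [set r | z r && (a r && (u r && (v r && true)))] * m [set r | z r && (u r && true)] =
  m [set r | z r && (a r && (u r && true))] * m [set r | z r && (u r && (v r && true))].
Proof.
move=> m0 [H|[H|[H|H]]].
- have -> : [set r | z r && (a r && (u r && (v r && true)))] = [set r | z r && (a r && (u r && true))].
    by rewrite predeqE => r /=; rewrite bl1 //; exact: H.
  have -> : [set r | z r && (u r && (v r && true))] = [set r | z r && (u r && true)].
    by rewrite predeqE => r /=; rewrite bl2 //; exact: H.
  by rewrite mulrC.
- have -> : [set r | z r && (a r && (u r && (v r && true)))] = set0.
    by rewrite predeqE => r /=; rewrite bl3 //; exact: H.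
  have -> : [set r | z r && (u r && (v r && true))] = set0.
    by rewrite predeqE => r /=; rewrite bl4 //; exact: H.
  by rewrite m0 !mul0r mulr0.
- have -> : [set r | z r && (a r && (u r && (v r && true)))] = [set r | z r && (u r && (v r && true))].
    by rewrite predeqE => r /=; rewrite bl5 //; exact: H.
  have -> : [set r | z r && (a r && (u r && true))] = [set r | z r && (u r && true)].
    by rewrite predeqE => r /=; rewrite bl6 //; exact: H.
  by rewrite mulrC.
- have -> : [set r | z r && (a r && (u r && (v r && true)))] = set0.
    by rewrite predeqE => r /=; rewrite bl7 //; exact: H.
  have -> : [set r | z r && (a r && (u r && true))] = set0.
    by rewrite predeqE => r /=; rewrite bl8 //; exact: H.
  by rewrite m0 !mul0r.
Qed.

Section Main.
Context {d : measure_display} {T : measurableType d} {R : realType}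
  (P : probability T R) (Theta : nat -> T -> R) (n : nat)
  (mT : forall i, measurable_fun setT (Theta i))
  (indep : mutually_independent P Theta)
  (cdf : forall (i : nat) (theta : R), 0 <= theta ->
      Pr P [set w | Theta i w <= theta] = cdfTheta i theta)
  (n1 : (1 <= n)%N).

Definition Ev (L : seq (R * seq nat)) :=
  [set w | all (fun p => Cproc Theta n p.1 w == p.2) L].
Definition G := Theta 0 @^-1` [set r : R | (r <= 0) == true].
Definition Kc (L : seq (R * seq nat)) :=
  all (fun p => (size (enc p.2) == n) && (dec (enc p.2) == p.2)) L.
Definition Bp (i : nat) (L : seq (R * seq nat)) :=
  Bset ((if i == 0%N then [:: (0 : R, true)] else [::]) ++
        [seq (p.1, nth false (enc p.2) i) | p <- L]).

Lemma G_meas : measurable G.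
Proof. apply: pre_meas => //; exact: Bset1_meas. Qed.

Lemma PrG : Pr P G = 1.
Proof.
have -> : G = [set w | Theta 0 w <= 0].
  by rewrite predeqE => w /=; split => /eqP.
by rewrite cdf // /cdfTheta addr0 eqxx.
Qed.

Lemma Cproc_eq tau w x : 0 <= tau -> Theta 0 w <= 0 ->
  (Cproc Theta n tau w == x) = [&& size (enc x) == n, dec (enc x) == x &
     all (fun i => (Theta i w <= tau) == nth false (enc x) i) (iota 0 n)].
Proof.
move=> tau0 th0; rewrite /Cproc bits_dec; last first.
  by case: n n1 => [|m] //= _; apply: le_trans tau0.
rewrite size_map size_iota; congr [&& _, _ & _].
apply: eq_in_all => i; rewrite mem_iota add0n => /andP [_ Hi].
by rewrite (nth_map 0%N) ?size_iota // nth_iota.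
Qed.

Lemma Ev_pt L w : all (fun p => 0 <= p.1) L ->
  (Ev L w /\ Theta 0 w <= 0) <->
  (Kc L /\ forall i, i \in iota 0 n -> Bp i L (Theta i w)).
Proof.
move=> /allP L0; split.
  move=> [/allP H th0]; split.
    apply/allP => p pL; have := H p pL; rewrite /= Cproc_eq ?L0 //.
    by case/and3P => -> ->.
  move=> i iI; rewrite /Bp /Bset /= all_cat all_map; apply/andP; split.
    by case: eqP => [->|_] //=; rewrite th0.
  apply/allP => p pL /=; have := H p pL; rewrite /= Cproc_eq ?L0 //.
  by case/and3P => _ _ /allP; apply.
move=> [/allP K H].
have th0 : Theta 0 w <= 0.
  have := H 0%N; rewrite mem_iota n1 /Bp /Bset /= => /(_ isT) /andP [/eqP ? _].
  by [].
split => //; apply/allP => p pL /=; rewrite Cproc_eq ?L0 //.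
have /andP [-> ->] := K p pL; apply/allP => i iI.
have := H i iI; rewrite /Bp /Bset /= all_cat all_map => /andP [_ /allP].
by move=> /(_ p pL).
Qed.

Lemma Ev_G L : all (fun p => 0 <= p.1) L ->
  Ev L `&` G = if Kc L then \bigcap_(i in [set i | i \in iota 0 n]) (Theta i @^-1` Bp i L)
               else set0.
Proof.
move=> L0; apply/seteqP; split => w.
  move=> [Hw Hg]; have [K H] := (Ev_pt L w L0).1 (conj Hw (eqP Hg : _ = true)).
  by rewrite K => i /= iI; exact: H.
case K: (Kc L) => //= H.
have [Hw Hg] := (Ev_pt L w L0).2 (conj K (fun i iI => H i iI)).
by split => //; rewrite /G /= Hg.
Qed.

Lemma PrEv L : all (fun p => 0 <= p.1) L ->
  Pr P (Ev L) = (Kc L)%:R * \prod_(i <- iota 0 n) Pr P (Theta i @^-1` Bp i L).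
Proof.
move=> L0; rewrite (Pr_as P _ _ (E_meas Theta mT n L) G_meas PrG) Ev_G //.
case: (Kc L); last by rewrite Pr0 mul0r.
rewrite mul1r indep ?iota_uniq // => j _; exact: Bset_meas.
Qed.
End Main.

Lemma kl {R : realType} (a b c : bool) :
  (a && (b && (c && true)))%:R * (b && true)%:R =
  (a && (b && true))%:R * (b && (c && true))%:R :> R.
Proof. by case: a b c => [] [] []; rewrite /= ?mul0r ?mulr0. Qed.

Section Markov.
Context {d : measure_display} {T : measurableType d} {R : realType}
  (P : probability T R) (Theta : nat -> T -> R) (n : nat)
  (mT : forall i, measurable_fun setT (Theta i))
  (indep : mutually_independent P Theta)
  (cdf : forall (i : nat) (theta : R), 0 <= theta ->
      Pr P [set w | Theta i w <= theta] = cdfTheta i theta)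
  (n1 : (1 <= n)%N).

Lemma markov_part : is_markov P (Cproc Theta n).
Proof.
move=> past s t x y Hp s0 st A Ex Ey HA.
have Hp0 : all (fun p => 0 <= p.1) past.
  by apply: sub_all Hp => p /andP [].
have e1 : A `&` Ex `&` Ey = Ev Theta n (past ++ [:: (s, x); (t, y)]).
  rewrite /A /Ex /Ey /Ev predeqE => w /=; rewrite all_cat /= andbT; split.
    by move=> [[H1 H2] H3]; rewrite H1 H2 H3 !eqxx.
  by move=> /and3P [H1 /eqP H2 /eqP H3].
have e2 : A `&` Ex = Ev Theta n (past ++ [:: (s, x)]).
  rewrite /A /Ex /Ev predeqE => w /=; rewrite all_cat /= andbT; split.
    by move=> [H1 H2]; rewrite H1 H2 !eqxx.
  by move=> /andP [H1 /eqP H2].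
have e3 : Ex `&` Ey = Ev Theta n [:: (s, x); (t, y)].
  rewrite /Ex /Ey /Ev predeqE => w /=; rewrite andbT; split.
    by move=> [H2 H3]; rewrite H2 H3 !eqxx.
  by move=> /andP [/eqP H2 /eqP H3].
have e4 : Ex = Ev Theta n [:: (s, x)].
  rewrite /Ex /Ev predeqE => w /=; rewrite andbT; split.
    by move=> H2; rewrite H2 !eqxx.
  by move=> /eqP H2.
have st0 : 0 <= t by apply: le_trans st.
have key : Pr P (A `&` Ex `&` Ey) * Pr P Ex = Pr P (A `&` Ex) * Pr P (Ex `&` Ey).
  rewrite e1 e2 e3 e4 !(PrEv P Theta n mT indep cdf n1); try by rewrite ?all_cat ?Hp0 /= ?s0 ?st0.
  rewrite mulrACA [in RHS]mulrACA; congr (_ * _).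
    rewrite /Kc !all_cat /=; exact: kl.
  rewrite -!big_split /=; apply: eq_bigr => i _.
  pose F r := fun q : R * bool => (r <= q.1) == q.2.
  pose L0 := if i == 0%N then [:: (0 : R, true)] else [::].
  pose M := [seq (p.1, nth false (enc p.2) i) | p <- past].
  pose bx := nth false (enc x) i.
  pose bt := nth false (enc y) i.
  have := mult_bool (fun B => Pr P (Theta i @^-1` B)) (fun r => all (F r) L0)
    (fun r => all (F r) M) (fun r => (r <= s) == bx) (fun r => (r <= t) == bt).
  rewrite /= Pr0 => /(_ erefl).
  have -> : Bp i (past ++ [:: (s, x); (t, y)]) =
     [set r | all (F r) L0 && (all (F r) M && (((r <= s) == bx) && (((r <= t) == bt) && true)))].
    by rewrite predeqE => r; rewrite /Bp /Bset /= map_cat !all_cat.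
  have -> : Bp i (past ++ [:: (s, x)]) =
     [set r | all (F r) L0 && (all (F r) M && (((r <= s) == bx) && true))].
    by rewrite predeqE => r; rewrite /Bp /Bset /= map_cat !all_cat.
  have -> : Bp i [:: (s, x); (t, y)] =
     [set r | all (F r) L0 && (((r <= s) == bx) && (((r <= t) == bt) && true))].
    by rewrite predeqE => r; rewrite /Bp /Bset /= !all_cat.
  have -> : Bp i [:: (s, x)] =
     [set r | all (F r) L0 && (((r <= s) == bx) && true)].
    by rewrite predeqE => r; rewrite /Bp /Bset /= !all_cat.
  apply.
  case Ebx: bx.
    case Ebt: bt.
      by left => r; rewrite !eqb_id => H; exact: le_trans H st.
    right; left => r; rewrite eqb_id => H; rewrite eqbF_neg negbK.
    exact: le_trans H st.
  case: (boolP (has (fun p : R * seq nat => nth false (enc p.2) i) past)) => Hh.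
    right; right; right => r; rewrite eqbF_neg -ltNge => sr.
    apply/negP => /allP Ha; move/hasP: Hh => [p pP bp].
    have := Ha (p.1, nth false (enc p.2) i) (map_f _ pP).
    rewrite /F /= bp eqb_id => rp.
    have /andP [_ ps] := allP Hp p pP.
    by have := le_lt_trans (le_trans rp ps) sr; rewrite ltxx.
  right; right; left => r; rewrite eqbF_neg -ltNge => sr.
  apply/allP => q /mapP [p pP ->]; rewrite /F /=.
  move/hasPn: Hh => /(_ p pP) /negbTE ->.
  have /andP [_ ps] := allP Hp p pP.
  by rewrite eqbF_neg -ltNge; exact: le_lt_trans ps sr.
have mEx : measurable Ex by rewrite e4; exact: E_meas.
have mAEx : measurable (A `&` Ex) by rewrite e2; exact: E_meas.
have PEx : 0 < Pr P Ex.
  by apply: lt_le_trans HA _; apply: Pr_le => //; exact: subIsetr.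
have h1 : Pr P (A `&` Ex) != 0 by rewrite gt_eqF.
have h2 : Pr P Ex != 0 by rewrite gt_eqF.
by apply/eqP; rewrite eqr_div //; apply/eqP; rewrite key mulrC.
Qed.
End Markov.
From mathcomp Require Import ring lra.
Import numFieldNormedType.Exports.

Lemma lim_inv {R : realType} (W : R) : W != 0 ->
  (W + h)^-1 @[h --> (0:R)^'+] --> W^-1.
Proof.
move=> W0; apply: cvg_at_right_filter.
have H : W + h @[h --> (0 : R)] --> W.
  rewrite -{2}(addr0 W); apply: cvgD; [exact: cvg_cst | exact: cvg_id].
exact: (cvgV W0 H).
Qed.

Lemma lim_frac {R : realType} (U V W : R) : W != 0 ->
  (U + V * h) / (W + h) @[h --> (0:R)^'+] --> U / W.
Proof.
move=> W0; apply: cvgM; last exact: lim_inv.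
apply: cvg_at_right_filter.
rewrite -{2}(addr0 U) -{2}(mulr0 V); apply: cvgD; first exact: cvg_cst.
apply: cvgM; [exact: cvg_cst | exact: cvg_id].
Qed.

Lemma lim_prod {R : realType} {I : Type} (r : seq I) (Pi : pred I)
  (f : I -> R -> R) (l : I -> R) (F : set_system R) : ProperFilter F ->
  (forall i, f i h @[h --> F] --> l i) ->
  \prod_(i <- r | Pi i) f i h @[h --> F] --> \prod_(i <- r | Pi i) l i.
Proof.
move=> PF Hf; elim: r => [|a r IH].
  under eq_fun do rewrite big_nil; rewrite big_nil; exact: cvg_cst.
under eq_fun do rewrite big_cons; rewrite big_cons.
case: (Pi a) => //; exact: cvgM.
Qed.

Section Rates.
Context {d : measure_display} {T : measurableType d} {R : realType}
  (P : probability T R) (Theta : nat -> T -> R) (n : nat)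
  (mT : forall i, measurable_fun setT (Theta i))
  (indep : mutually_independent P Theta)
  (cdf : forall (i : nat) (theta : R), 0 <= theta ->
      Pr P [set w | Theta i w <= theta] = cdfTheta i theta)
  (n1 : (1 <= n)%N)
  (theta : R) (c c' : seq nat) (th0 : 0 <= theta)
  (Hc : is_composition n c) (Hc' : is_composition n c').

Definition e i := nth false (enc c) i.
Definition e' i := nth false (enc c') i.
Definition U i : R := if e i then (if e' i then 1 else 0) else (if e' i then 0 else theta + i%:R).
Definition V i : R := if e' i then 1 else 0.
Definition W i : R := if e i then 1 else theta + i%:R.
Definition phi i (h : R) := (U i + V i * h) / (W i + h).

Lemma le_meas i tau : measurable [set w | Theta i w <= tau].
Proof.
have -> : [set w | Theta i w <= tau] = Theta i @^-1` [set r | (r <= tau) == true].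
  by rewrite predeqE => w /=; rewrite eqb_id.
apply: pre_meas => //; exact: Bset1_meas.
Qed.

Lemma PrLe i tau : (0 < i)%N -> 0 <= tau ->
  Pr P [set w | Theta i w <= tau] = tau / (tau + i%:R).
Proof.
move=> i0 t0; rewrite cdf // /cdfTheta gt_eqF //.
by apply: lt_le_trans (ler_wpDl t0 (lexx _)); rewrite ltr0n.
Qed.

Lemma coord i (h : R) : (i < n)%N -> 0 < h ->
  Pr P (Theta i @^-1` Bp i [:: (theta, c); (theta + h, c')]) =
  phi i h * Pr P (Theta i @^-1` Bp i [:: (theta, c)]).
Proof.
move=> ilt h0.
have h1 : 1 + h != 0 by rewrite gt_eqF // ltr_wpDr // ltW.
case: i ilt => [|k] klt.
  have -> : phi 0 h = 1.
    rewrite /phi /U /V /W /e /e' (@comp_head n c n1 Hc) (@comp_head n c' n1 Hc') mul1r.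
    by rewrite divff.
  rewrite mul1r; congr (Pr P _).
  rewrite predeqE => w; rewrite /Bp /Bset /= (@comp_head n c n1 Hc) (@comp_head n c' n1 Hc') !eqb_id !andbT.
  split; first by case/and3P => -> ->.
  case/andP => H1 H2; rewrite H1 H2 /=.
  by apply: le_trans H2 _; rewrite lerDl ltW.
have k0 : (0 < k.+1)%N by [].
have ik : theta + k.+1%:R != 0.
  by rewrite gt_eqF //; apply: lt_le_trans (ler_wpDl th0 (lexx _)); rewrite ltr0n.
have ikh : theta + k.+1%:R + h != 0.
  by rewrite gt_eqF //; apply: ltr_wpDr (ltW h0) _; apply: lt_le_trans (ler_wpDl th0 (lexx _)); rewrite ltr0n.
have thh : 0 <= theta + h by rewrite addr_ge0 // ltW.
rewrite /phi /U /V /W /e /e' /Bp /Bset /=.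
case: (nth false (enc c) k.+1); case: (nth false (enc c') k.+1).
- have -> : Theta k.+1 @^-1` [set r | ((r <= theta) == true) && (((r <= theta + h) == true) && true)]
          = Theta k.+1 @^-1` [set r | ((r <= theta) == true) && true].
    rewrite predeqE => w /=; rewrite !eqb_id !andbT; split; first by case/andP.
    by move=> H; rewrite H /=; apply: le_trans H _; rewrite lerDl ltW.
  by rewrite mul1r divff // mul1r.
- have -> : Theta k.+1 @^-1` [set r | ((r <= theta) == true) && (((r <= theta + h) == false) && true)]
          = set0.
    rewrite predeqE => w /=; rewrite eqb_id andbT eqbF_neg; split => // /andP [H].
    by rewrite (le_trans H) // lerDl ltW.
  by rewrite Pr0 mul0r add0r !mul0r.
- have -> : Theta k.+1 @^-1` [set r | ((r <= theta) == false) && (((r <= theta + h) == true) && true)]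
          = [set w | Theta k.+1 w <= theta + h] `\` [set w | Theta k.+1 w <= theta].
    rewrite predeqE => w /=; rewrite eqb_id andbT eqbF_neg; split; first by case/andP => /negP.
    by case=> H1 /negP H2; rewrite H1 H2.
  have -> : Theta k.+1 @^-1` [set r | ((r <= theta) == false) && true]
          = ~` [set w | Theta k.+1 w <= theta].
    by rewrite predeqE => w /=; rewrite andbT eqbF_neg; split => /negP.
  have HD := PrDI P (le_meas k.+1 (theta + h)) (le_meas k.+1 theta).
  have AB : [set w | Theta k.+1 w <= theta + h] `&` [set w | Theta k.+1 w <= theta]
          = [set w | Theta k.+1 w <= theta].
    rewrite predeqE => w /=; split; first by case.
    by move=> H; split => //; apply: le_trans H _; rewrite lerDl ltW.
  rewrite AB in HD.
  rewrite (_ : Pr P (_ `\` _) = Pr P [set w | Theta k.+1 w <= theta + h] - Pr P [set w | Theta k.+1 w <= theta]); last by rewrite HD addrK.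
  rewrite PrC; last exact: le_meas.
  rewrite (PrLe _ _ k0 thh) (PrLe _ _ k0 th0).
  by field; rewrite nat1r ik ikh.
- have -> : Theta k.+1 @^-1` [set r | ((r <= theta) == false) && (((r <= theta + h) == false) && true)]
          = ~` [set w | Theta k.+1 w <= theta + h].
    rewrite predeqE => w /=; rewrite !andbT !eqbF_neg; split; first by case/andP => _ /negP.
    move=> H; apply/andP; split; last exact/negP.
    apply/negP => Hq; apply: H.
    by apply: le_trans Hq _; rewrite lerDl ltW.
  have -> : Theta k.+1 @^-1` [set r | ((r <= theta) == false) && true]
          = ~` [set w | Theta k.+1 w <= theta].
    by rewrite predeqE => w /=; rewrite andbT eqbF_neg; split => /negP.
  rewrite !PrC; try exact: le_meas.
  rewrite (PrLe _ _ k0 thh) (PrLe _ _ k0 th0).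
  by field; rewrite nat1r ik ikh.
Qed.

Lemma e_size : size (enc c) = n.
Proof. exact: comp_size Hc. Qed.
Lemma e_size' : size (enc c') = n.
Proof. exact: comp_size Hc'. Qed.

Lemma W_neq0 i : W i != 0.
Proof.
case: i => [|k]; first by rewrite /W /e (@comp_head n c n1 Hc) oner_eq0.
rewrite /W; case: (e k.+1); first exact: oner_neq0.
by rewrite gt_eqF //; apply: lt_le_trans (ler_wpDl th0 (lexx _)); rewrite ltr0n.
Qed.

Lemma cond_iff i : (i < n)%N ->
  ((nth true (enc c) i == false) && (enc c' == set_nth false (enc c) i true)) =
  (~~ e i) && all (fun m => e' m == (m == i) || e m) (iota 0 n).
Proof.
move=> ilt; rewrite (set_nth_default false) ?e_size // eqbF_neg; congr andb.
apply/eqP/allP.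
  move=> E m _; rewrite /e' E nth_set_nth /=.
  by case: (m == i).
move=> H; apply: (@eq_from_nth _ false).
  by rewrite size_set_nth e_size e_size'; apply/esym/maxn_idPr.
move=> m; rewrite e_size' => mlt; rewrite nth_set_nth /=.
have := H m; rewrite mem_iota add0n mlt => /(_ isT) /eqP; rewrite /e' => ->.
by case: (m == i).
Qed.

Lemma rate_fixed : c != c' -> 0 < Pr P [set w | Cproc Theta n theta w = c] ->
  (fun h => Pr P ([set w | Cproc Theta n theta w = c] `&`
                  [set w | Cproc Theta n (theta + h) w = c'])
            / Pr P [set w | Cproc Theta n theta w = c] / h)
    @ 0^'+ --> rate n theta c c'.
Proof.
move=> cc' Hpos.
pose q i := Pr P (Theta i @^-1` Bp i [:: (theta, c)]).
have ExE : [set w | Cproc Theta n theta w = c] = Ev Theta n [:: (theta, c)].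
  by rewrite /Ev predeqE => w /=; rewrite andbT; split => [->|/eqP].
have PEx : Pr P [set w | Cproc Theta n theta w = c] = \prod_(i <- iota 0 n) q i.
  rewrite ExE (PrEv P Theta n mT indep cdf n1) /=; last by rewrite th0.
  by rewrite /Kc /= e_size (comp_dec _ _ Hc) !eqxx mul1r.
have Pne : \prod_(i <- iota 0 n) q i != 0 by rewrite -PEx gt_eqF.
have ratio : forall h : R, 0 < h ->
    Pr P ([set w | Cproc Theta n theta w = c] `&`
          [set w | Cproc Theta n (theta + h) w = c'])
    / Pr P [set w | Cproc Theta n theta w = c] = \prod_(i <- iota 0 n) phi i h.
  move=> h h0.
  have -> : [set w | Cproc Theta n theta w = c] `&` [set w | Cproc Theta n (theta + h) w = c']
      = Ev Theta n [:: (theta, c); (theta + h, c')].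
    rewrite /Ev predeqE => w /=; rewrite andbT; split.
      by move=> [-> ->]; rewrite !eqxx.
    by move=> /andP [/eqP -> /eqP ->].
  rewrite PEx (PrEv P Theta n mT indep cdf n1) /=; last by rewrite th0 addr_ge0 // ltW.
  rewrite /Kc /= e_size e_size' (comp_dec _ _ Hc) (comp_dec _ _ Hc') !eqxx mul1r.
  rewrite (eq_big_seq (fun i => phi i h * q i)); last first.
    by move=> i; rewrite mem_iota add0n => /andP [_ ilt]; exact: coord.
  by rewrite big_split /= mulfK.
case: (boolP (has (fun i => e i && ~~ e' i) (iota 0 n))) => [/hasP [j jI bj] | nobad].
  have r0 : rate n theta c c' = 0.
    rewrite /rate big1 // => i _; rewrite cond_iff //; case: ifP => // /andP [ei /allP H].
    move/andP: bj => [ej nej].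
    by have := H j jI; rewrite (negbTE nej) ej orbT.
  rewrite r0; apply: cvg_near_cst; near=> h.
  have h0 : 0 < h by near: h; exact: nbhs_right_gt.
  rewrite /= ratio // (bigD1_seq j) ?iota_uniq //=.
  move/andP: bj => [ej nej].
  by rewrite /phi /U /V ej (negbTE nej) mul0r addr0 !mul0r.
have nb : forall i, i \in iota 0 n -> e i -> e' i.
  move=> i iI ei; apply/negPn/negP => ne.
  by move/hasP: nobad; apply; exists i => //; rewrite ei ne.
have [j jI fj] : exists2 j, j \in iota 0 n & ~~ e j && e' j.
  apply/hasP; apply/negPn/negP => nof.
  move/negP: cc'; apply.
  rewrite -(comp_dec _ _ Hc) -(comp_dec _ _ Hc'); apply/eqP; apply: f_equal.
  apply: (@eq_from_nth _ false); first by rewrite e_size e_size'.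
  move=> i; rewrite e_size => ilt.
  have iI : i \in iota 0 n by rewrite mem_iota add0n ilt.
  have := nb i iI; move/hasPn: nof => /(_ i iI).
  rewrite /e /e'; case: (nth false (enc c) i); case: (nth false (enc c') i) => //= _; by move=> /(_ isT).
move/andP: fj => [nej e'j].
have Hlim : (W j + h)^-1 * \prod_(i <- iota 0 n | i != j) phi i h @[h --> (0:R)^'+]
            --> (W j)^-1 * \prod_(i <- iota 0 n | i != j) (U i / W i).
  apply: cvgM; first exact: lim_inv (W_neq0 j).
  apply: lim_prod => i; exact: lim_frac (W_neq0 i).
have jlt : (j < n)%N by move: jI; rewrite mem_iota add0n => /andP [].
have rE : rate n theta c c' = (W j)^-1 * \prod_(i <- iota 0 n | i != j) (U i / W i).
  case: (boolP (has (fun k => (k != j) && (~~ e k && e' k)) (iota 0 n))).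
    move=> /hasP [k kI /andP [kj /andP [nek e'k]]].
    rewrite big_mkcond (bigD1_seq k) ?iota_uniq //= kj /U (negbTE nek) e'k !mul0r mulr0.
    rewrite /rate big1 // => i _; rewrite cond_iff //; case: ifP => // /andP [_ /allP H].
    have := H j jI; have := H k kI.
    rewrite (negbTE nej) (negbTE nek) e'j e'k !orbF => /eqP ki /eqP ji.
    by move: kj; rewrite (eqP (esym ki)) (eqP (esym ji)) eqxx.
  move=> noother.
  rewrite big1_seq ?mulr1; last first.
    move=> i /andP [ij iI]; rewrite /U /W.
    case E: (e i); first by rewrite (nb i iI E) invr1 mulr1.
    have := hasPn noother i iI; rewrite ij E /= => /negbTE ->.
    by rewrite divff //; have := W_neq0 i; rewrite /W E.
  rewrite /rate (bigD1 (Ordinal jlt)) //= big1 ?addr0.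
    rewrite cond_iff // ifT; first by rewrite /W (negbTE nej).
    rewrite nej /=; apply/allP => m mI.
    case: (eqVneq m j) => [->|mj]; first by rewrite e'j.
    rewrite ?(negbTE mj) /=.
    case E: (e m); first by rewrite (nb m mI E).
    have := hasPn noother m mI; rewrite mj E /=.
    by move/negbTE ->.
  move=> i ij; rewrite cond_iff //; case: ifP => // /andP [_ /allP H].
  have := H j jI; rewrite (negbTE nej) e'j orbF => /eqP H1.
  by move: ij; rewrite -val_eqE /= eq_sym -H1.
rewrite rE; apply: cvg_trans Hlim; apply: near_eq_cvg; near=> h.
have h0 : 0 < h by near: h; exact: nbhs_right_gt.
rewrite /= ratio // (bigD1_seq j) ?iota_uniq //=.
rewrite /phi /U /V (negbTE nej) e'j add0r mul1r.
have Wh : W j + h != 0.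
  by rewrite /W (negbTE nej) gt_eqF // ltr_wpDl // addr_ge0.
set B := \prod_(_ <- _ | _) _.
by field; rewrite Wh gt_eqF.
Unshelve. all: by end_near.
Qed.

End Rates.

(* Theta i stands for Theta_{i+1}; Cproc Theta n theta = C_{n,theta}. *)
Theorem corollary3 (d : measure_display) (T : measurableType d) (R : realType)
  (P : probability T R) (Theta : nat -> T -> R) (n : nat) :
  (forall i, measurable_fun setT (Theta i)) ->
  mutually_independent P Theta ->
  (forall (i : nat) (theta : R), 0 <= theta ->
      Pr P [set w | Theta i w <= theta] = cdfTheta i theta) ->
  (1 <= n)%N ->
  is_markov P (Cproc Theta n) /\
  has_rates P n (Cproc Theta n) (rate n).
Proof.
move=> mT indep cdf n1; split.
  exact: (markov_part P Theta n mT indep cdf n1).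
move=> theta c c' th0 Hc Hc' cc' Hpos.
exact: (rate_fixed P Theta n mT indep cdf n1 theta c c' th0 Hc Hc' cc' Hpos).
Qed.
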